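(* Let $\{g_k\}_{k\ge1}\subset\mathbb{R}^{+}\cup\{0\}$ be arbitrary, and for $n=1,2,\dots$ define $\Gamma_{(n)}:\mathcal{O}\to\mathcal{O}$ by $$\Gamma_{(n)}\varphi(x)=\frac{\varphi(x)\exp\!\left(x\sum_{k=1}^{n}g_k\right)}{\sum_{y\in E_\varphi}\varphi(y)\exp\!\left(y\sum_{k=1}^{n}g_k\right)},\qquad x\in\mathbb{R}.$$ If the real sequence $\left\{\sum_{k=1}^{n}g_k\right\}_{n\ge1}$ is Cauchy, then for every $\varphi\in\mathcal{O}$ the sequence $\{\Gamma_{(n)}\varphi\}_{n\ge1}$ is a Cauchy sequence in the metric space $(\mathcal{O},d)$.
   Context: A normalized fitness distribution (NFD) is a function $\varphi:\mathbb{R}\to[0,1]$ whose support $E_\varphi=\{x:\varphi(x)\neq0\}$ is finite and which satisfies $\sum_{x\in E_\varphi}\varphi(x)=1$; $\mathcal{O}$ denotes the space of all NFDs. The metric $d$ on $\mathcal{O}$ is $d(\varphi_1,\varphi_2)=\sum_{x\in E_{\varphi_1}\cup E_{\varphi_2}}|\varphi_1(x)-\varphi_2(x)|$. *)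

(* Defs.v *)
From Stdlib Require Import Reals List.
Import ListNotations.
Open Scope R_scope.

Definition lsum (s : list R) (f : R -> R) : R := fold_right (fun x acc => f x + acc) 0 s.

(* A normalized fitness distribution: phi : R -> [0,1] with finite support
   E_phi (enumerated without repetition by nfd_supp) and total mass 1. *)
Record NFD := {
  nfd_fun :> R -> R;
  nfd_supp : list R;
  nfd_nodup : NoDup nfd_supp;
  nfd_supp_spec : forall x, nfd_fun x <> 0 <-> In x nfd_supp;
  nfd_range : forall x, 0 <= nfd_fun x <= 1;
  nfd_sum : lsum nfd_supp nfd_fun = 1
}.

Definition supp_union (E1 E2 : list R) : list R :=
  nodup Req_EM_T (E1 ++ E2).

Definition dist_fun (f1 : R -> R) (E1 : list R) (f2 : R -> R) (E2 : list R) : R :=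
  lsum (supp_union E1 E2) (fun x => Rabs (f1 x - f2 x)).

Definition d (p1 p2 : NFD) : R :=
  dist_fun p1 (nfd_supp p1) p2 (nfd_supp p2).

(* Partial sums G n = sum_{k=1}^n g_k  (g indexed from 1; g 0 unused). *)
Definition G (g : nat -> R) (n : nat) : R := sum_f 1 n g.

Definition Gamma (g : nat -> R) (n : nat) (phi : NFD) : R -> R :=
  fun x => phi x * exp (x * G g n) /
           lsum (nfd_supp phi) (fun y => phi y * exp (y * G g n)).

(* Main.v *)
Require Import Defs.
From Stdlib Require Import Reals List Lra Lia.
Open Scope R_scope.

Lemma lsum_cauchy (s : list R) (u : nat -> R -> R) :
  (forall x, In x s -> Cauchy_crit (fun n => u n x)) ->
  forall eps, eps > 0 -> exists N : nat, forall m n, (N <= m)%nat -> (N <= n)%nat ->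
    lsum s (fun x => Rabs (u m x - u n x)) < eps.
Proof.
  induction s as [|a s IH]; intros H eps Heps.
  - exists 0%nat. intros. simpl. lra.
  - destruct (H a (or_introl eq_refl) (eps/2)) as [N1 H1]; [lra|].
    destruct (IH (fun x Hx => H x (or_intror Hx)) (eps/2)) as [N2 H2]; [lra|].
    exists (max N1 N2). intros m n Hm Hn. simpl.
    assert (A := H1 m n ltac:(lia) ltac:(lia)). unfold Rdist in A.
    assert (B := H2 m n ltac:(lia) ltac:(lia)). lra.
Qed.

Lemma lsum_cv (s : list R) (f : nat -> R -> R) (l : R -> R) :
  (forall x, In x s -> Un_cv (fun n => f n x) (l x)) ->
  Un_cv (fun n => lsum s (f n)) (lsum s l).
Proof.
  induction s as [|a s IH]; intros H; simpl.
  - intros e He. exists 0%nat. intros. unfold Rdist. rewrite Rminus_0_r, Rabs_R0. lra.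
  - apply CV_plus. apply H; now left. apply IH. intros; apply H; now right.
Qed.

Lemma lsum_nonneg (s : list R) (f : R -> R) :
  (forall x, In x s -> 0 <= f x) -> 0 <= lsum s f.
Proof.
  induction s as [|a s IH]; intros H; simpl. lra.
  assert (0 <= f a) by (apply H; now left).
  assert (0 <= lsum s f) by (apply IH; intros; apply H; now right). lra.
Qed.

Lemma lsum_pos (s : list R) (f : R -> R) :
  s <> nil -> (forall x, In x s -> 0 < f x) -> 0 < lsum s f.
Proof.
  destruct s as [|a s]; intros Hs H. congruence. simpl.
  assert (0 < f a) by (apply H; now left).
  assert (0 <= lsum s f) by (apply lsum_nonneg; intros; left; apply H; now right). lra.
Qed.

Lemma cv_exp_term (a : nat -> R) (l c x : R) : Un_cv a l ->
  Un_cv (fun n => c * exp (x * a n)) (c * exp (x * l)).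
Proof.
  intros Ha. apply CV_mult.
  - intros e He. exists 0%nat. intros. unfold Rdist. rewrite Rminus_diag, Rabs_R0. lra.
  - apply (continuity_seq exp (fun n => x * a n)).
    + apply derivable_continuous_pt. apply derivable_pt_exp.
    + assert (H := CV_mult (fun _ => x) a x l). apply H; [|exact Ha].
      intros e He. exists 0%nat. intros. unfold Rdist. rewrite Rminus_diag, Rabs_R0. lra.
Qed.

Theorem theorem1 (g : nat -> R) :
  (forall k, (1 <= k)%nat -> 0 <= g k) ->
  (forall eps, eps > 0 -> exists N : nat, forall m n,
      (1 <= m)%nat -> (1 <= n)%nat -> (N <= m)%nat -> (N <= n)%nat ->
      Rabs (G g m - G g n) < eps) ->
  forall phi : NFD,
  forall eps, eps > 0 -> exists N : nat, forall m n,
      (1 <= m)%nat -> (1 <= n)%nat -> (N <= m)%nat -> (N <= n)%nat ->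
      dist_fun (Gamma g m phi) (nfd_supp phi) (Gamma g n phi) (nfd_supp phi) < eps.
Proof.
  intros _ HC phi eps Heps.
  assert (CC : Cauchy_crit (G g)).
  { intros e He. destruct (HC e He) as [N HN]. exists (max N 1).
    intros n m Hn Hm. unfold Rdist. apply HN; lia. }
  destruct (R_complete _ CC) as [L HL].
  set (D := lsum (nfd_supp phi) (fun y => phi y * exp (y * L))).
  assert (HD : 0 < D).
  { apply lsum_pos.
    - intro E. pose proof (nfd_sum phi) as S. rewrite E in S. simpl in S. lra.
    - intros y Hy. apply Rmult_lt_0_compat; [|apply exp_pos].
      pose proof (nfd_range phi y). apply (nfd_supp_spec phi y) in Hy. lra. }
  assert (Hcv : forall x, Un_cv (fun n => Gamma g n phi x) (phi x * exp (x * L) * / D)).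
  { intro x. unfold Gamma, Rdiv. apply CV_mult.
    - apply cv_exp_term; exact HL.
    - apply (continuity_seq Rinv (fun n => lsum (nfd_supp phi) (fun y => phi y * exp (y * G g n)))).
      + apply (continuity_pt_inv id). apply derivable_continuous_pt, derivable_pt_id. unfold id. lra.
      + apply lsum_cv. intros y _. apply cv_exp_term; exact HL. }
  destruct (lsum_cauchy (supp_union (nfd_supp phi) (nfd_supp phi)) (fun n x => Gamma g n phi x))
    with (eps := eps) as [N HN]; auto.
  { intros x _. apply CV_Cauchy. exists (phi x * exp (x * L) * / D). apply Hcv. }
  exists N. intros m n _ _ Hm Hn. unfold dist_fun. apply HN; lia.
Qed.
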